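(* Let $k\ge1$, $G=(V,E)$ an inductively $k$-independent graph with $k$-independence ordering $v_1,\dots,v_n$, $f:2^V\to\mathbb{R}_{\ge0}$ submodular with $f(\emptyset)=0$, $\beta>0$ and $p\in(0,1)$. Let $S_{\mathrm{out}}$ be the output of algorithm PD-RAND (described in the context) and $\mathrm{OPT}=\max\{f(T):T\text{ independent in }G\}$. Then \[ \mathrm{OPT}\le\frac{k\max\{\frac{1-p}{p},1+\beta\}+\frac{1+\beta}{\beta}}{1-p}\;\mathbb{E}[f(S_{\mathrm{out}})]. \]
   Context: $N(v)$ is the neighbourhood of $v$ (excluding $v$); $G$ is inductively $k$-independent with $k$-independence ordering $v_1,\dots,v_n$ if for every $i$, $G[N(v_i)\cap\{v_i,\dots,v_n\}]$ has no independent set of size more than $k$. For $S\subseteq V$, $f_S(v)=f(S\cup\{v\})-f(S)$. Algorithm PD-RAND (parameters $\beta>0$, $p\in(0,1)$). Phase 1: start with $S=\emptyset$ (a stack) and $w_1=\dots=w_n=0$. For $i=1,\dots,n$: let $C_i=N(v_i)\cap S$ for the current $S$; if $f_S(v_i)>(1+\beta)\sum_{v_j\in C_i}w_j$, then with probability $p$ (independently of all else) set $w_i=f_S(v_i)-\sum_{v_j\in C_i}w_j$ (with $S$ the set before insertion) and push $v_i$ onto $S$; in all other cases leave $w_i=0$ and do not add $v_i$. Let $S_{\mathrm{end}}$ be $S$ at the end of Phase 1. Phase 2: with $S_{\mathrm{out}}=\emptyset$, pop vertices of $S_{\mathrm{end}}$ in reverse insertion order, adding a popped $v$ to $S_{\mathrm{out}}$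 whenever $S_{\mathrm{out}}\cup\{v\}$ is independent. Output $S_{\mathrm{out}}$. *)

(* Defs.v *)
From HB Require Import structures.
From mathcomp Require Import all_boot all_order all_algebra.
Set Implicit Arguments. Unset Strict Implicit. Unset Printing Implicit Defensive.
Import Order.TTheory GRing.Theory Num.Theory.
Local Open Scope ring_scope.

Section PDRand.
Variables (R : realFieldType) (V : finType).

Definition simple_graph (e : rel V) : Prop := symmetric e /\ irreflexive e.

Definition nbhd (e : rel V) (v : V) : {set V} := [set u | e v u].

Definition independent (e : rel V) (A : {set V}) : bool :=
  [forall x in A, forall y in A, ~~ e x y].

Definition vertex_ordering (vs : seq V) : Prop := uniq vs /\ forall v, v \in vs.

Definition inductively_k_independent (e : rel V) (k : nat) (vs : seq V) : Prop :=
  vertex_ordering vs /\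
  forall (i : 'I_(size vs)) (A : {set V}),
    A \subset nbhd e (tnth (in_tuple vs) i) :&: [set x in drop i vs] ->
    independent e A -> (#|A| <= k)%N.

Definition submodular (f : {set V} -> R) : Prop :=
  forall A B : {set V}, f (A :|: B) + f (A :&: B) <= f A + f B.

Definition marginal (f : {set V} -> R) (S : {set V}) (v : V) : R :=
  f (v |: S) - f S.

(* Phase 1 state: the stack S (top = head of the list, i.e. most recently
   pushed first) and the weights w. *)
Definition phase1_step (e : rel V) (f : {set V} -> R) (beta : R)
    (coin : V -> bool) (st : seq V * (V -> R)) (v : V) : seq V * (V -> R) :=
  let: (Sk, w) := st in
  let Sset := [set x in Sk] in
  let sumw := \sum_(u in nbhd e v :&: Sset) w u in
  let fSv := marginal f Sset v in
  if (fSv > (1 + beta) * sumw) && coin v then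
    (v :: Sk, fun u => if u == v then fSv - sumw else w u)
  else (Sk, w).

(* coin v = outcome of the independent probability-p coin used when v is
   considered (only consulted if the threshold test passes) *)
Definition phase1 (e : rel V) (f : {set V} -> R) (beta : R)
    (coin : V -> bool) (vs : seq V) : seq V * (V -> R) :=
  foldl (phase1_step e f beta coin) ([::], fun _ => 0) vs.

(* Phase 2: pop S_end in reverse insertion order (= head first) *)
Definition phase2 (e : rel V) (Send : seq V) : {set V} :=
  foldl (fun Sout v => if independent e (v |: Sout) then v |: Sout else Sout)
        set0 Send.

Definition pd_rand (e : rel V) (f : {set V} -> R) (beta : R)
    (coin : V -> bool) (vs : seq V) : {set V} :=
  phase2 e (phase1 e f beta coin vs).1.

Definition coin_prob (p : R) (b : {ffun V -> bool}) : R :=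
  \prod_(v : V) (if b v then p else 1 - p).

Definition expected_output (e : rel V) (f : {set V} -> R) (beta p : R)
    (vs : seq V) : R :=
  \sum_(b : {ffun V -> bool}) coin_prob p b * f (pd_rand e f beta b vs).

End PDRand.

(* Main.v *)
Require Import Defs.
From HB Require Import structures.
From mathcomp Require Import all_boot all_order all_algebra.
From mathcomp Require Import ring lra.
Import Order.TTheory GRing.Theory Num.Theory.
Local Open Scope ring_scope.
Set Implicit Arguments. Unset Strict Implicit. Unset Printing Implicit Defensive.

Lemma marg_mono (R : realFieldType) (V : finType) (f : {set V} -> R) :
  submodular f -> forall (A B : {set V}) x, A \subset B -> x \notin B ->
  marginal f B x <= marginal f A x.
Proof.
move=> sf A B x sAB xB; rewrite /marginal.
have := sf (x |: A) B.
have -> : (x |: A) :|: B = x |: B.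
  apply/setP=> y; rewrite !inE; case: (y == x) => //=.
  by case yA: (y \in A) => //=; rewrite (subsetP sAB y yA).
have -> : (x |: A) :&: B = A.
  apply/setP=> y; rewrite !inE; case: eqP => [->|_] /=.
    by rewrite (negbTE xB); apply/esym/negP => /(subsetP sAB); rewrite (negbTE xB).
  by case yA: (y \in A) => //=; rewrite (subsetP sAB y yA).
move=> H; lra.
Qed.

Section RandSet.
Variables (R : realFieldType) (V O : finType) (mu : O -> R) (h : {set V} -> R)
  (F : O -> {set V}) (pm : R).
Hypotheses (mu_ge0 : forall x, 0 <= mu x) (mu_sum : \sum_x mu x = 1)
  (h_ge0 : forall A, 0 <= h A) (h_sub : submodular h)
  (Fp : forall v, \sum_x mu x * (v \in F x)%:R <= pm).

Let Pr v := \sum_x mu x * (v \in F x)%:R.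

Lemma Pr_ge0 v : 0 <= Pr v.
Proof. by apply: sumr_ge0 => x _; rewrite mulr_ge0. Qed.

Lemma rand_gen n : forall (D : {set V}) q, #|D| = n -> 0 <= q -> q <= pm ->
  (forall v, v \in D -> q <= Pr v) ->
  (1 - pm) * h set0 + q * h D <= \sum_x mu x * h (F x :&: D).
Proof.
elim: n => [|n IH] D q cD q0 qp qD.
  move/eqP: cD; rewrite cards_eq0 => /eqP ->.
  under eq_bigr do rewrite setI0.
  rewrite -big_distrl /= mu_sum mul1r.
  have := h_ge0 set0; nra.
have [u0 u0D] : exists u0, u0 \in D.
  by apply/set0Pn; rewrite -card_gt0 cD.
case: (arg_minP Pr u0D) => u uD0 umin0.
have uD : u \in D := uD0.
have umin : forall j, j \in D -> Pr u <= Pr j := umin0.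
set D' := D :\ u.
have cD' : #|D'| = n.
  by have := cardsD1 u D; rewrite uD cD add1n => -[].
have IH' := IH D' (Pr u) cD' (Pr_ge0 u) (Fp u).
have IH2 : (1 - pm) * h set0 + Pr u * h D' <= \sum_x mu x * h (F x :&: D').
  by apply: IH' => v; rewrite !inE => /andP[_ vD]; apply: umin.
have pw : forall x, h (F x :&: D') + (u \in F x)%:R * (h D - h D') <= h (F x :&: D).
  move=> x; case uF: (u \in F x); last first.
    have -> : F x :&: D = F x :&: D'.
      apply/setP=> y; rewrite !inE; case: eqP => [->|_] //=; by rewrite uF.
    rewrite mul0r; lra.
  have e1 : F x :&: D = u |: (F x :&: D').
    apply/setP=> y; rewrite !inE; case: eqP => [->|_] //=; by rewrite uF uD.
  have e2 : D = u |: D' by rewrite setD1K.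
  have := marg_mono h_sub (A:=F x :&: D') (B:=D') (x:=u).
  rewrite /marginal -e1 -e2 subsetIr !inE eqxx /= => /(_ isT isT); lra.
have sum1 : \sum_x mu x * h (F x :&: D') + Pr u * (h D - h D') <= \sum_x mu x * h (F x :&: D).
  rewrite /Pr big_distrl /= -big_split /=; apply: ler_sum => x _.
  rewrite -mulrA -mulrDr; apply: ler_wpM2l => //; exact: pw.
have := qD u uD; have := h_ge0 D; nra.
Qed.
Lemma rand_main : 0 <= pm -> (1 - pm) * h set0 <= \sum_x mu x * h (F x).
Proof.
move=> pm0; have := @rand_gen #|[set: V]| [set: V] 0 erefl (lexx 0) pm0.
rewrite mul0r addr0.
have -> : \sum_x mu x * h (F x :&: [set: V]) = \sum_x mu x * h (F x).
  by apply: eq_bigr => x _; rewrite setIT.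
by apply=> v _; apply: Pr_ge0.
Qed.
End RandSet.

Section Phase1.
Variables (R : realFieldType) (V : finType) (e : rel V) (f : {set V} -> R) (beta : R).

Local Notation step c := (phase1_step e f beta c).

Lemma foldl_coin_ext c c' s st : (forall v, v \in s -> c v = c' v) ->
  foldl (step c) st s = foldl (step c') st s.
Proof.
elim: s st => [|v s IH] st H //=.
have -> : step c st v = step c' st v.
  by case: st => Sk w; rewrite /phase1_step (H v (mem_head _ _)).
by apply: IH => x xs; apply: H; rewrite inE xs orbT.
Qed.

Lemma step_w_out c st v u : u != v -> (step c st v).2 u = st.2 u.
Proof.
by case: st => Sk w uv; rewrite /phase1_step; case: ifP => //= _; rewrite (negbTE uv).
Qed.

Lemma foldl_w_out c s st u : u \notin s -> (foldl (step c) st s).2 u = st.2 u.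
Proof.
elim: s st => [|v s IH] st //=; rewrite inE negb_or => /andP[uv us].
by rewrite IH // step_w_out.
Qed.

Lemma step_S c st v x : (x \in (step c st v).1) = (x \in st.1) || ((x == v) && (x \in (step c st v).1)).
Proof.
case: st => Sk w; rewrite /phase1_step; case: ifP => //= _.
  by rewrite inE; case: (x == v); case: (x \in Sk).
by case: (x \in Sk); rewrite ?andbF.
Qed.

Lemma foldl_S_mono c s st x : x \in st.1 -> x \in (foldl (step c) st s).1.
Proof.
elim: s st => [|v s IH] st //= xs; apply: IH.
by case: st xs => Sk w xs; rewrite /phase1_step; case: ifP => //= _; rewrite inE xs orbT.
Qed.

Lemma foldl_S_sub c s st x : x \in (foldl (step c) st s).1 -> (x \in st.1) || (x \in s).
Proof.
elim: s st => [|v s IH] st /=; first by rewrite orbF.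
move/IH; rewrite inE; case/orP => [|->]; last by rewrite !orbT.
rewrite step_S => /orP[->//|/andP[/eqP-> _]]; by rewrite eqxx orbT.
Qed.

Fixpoint good (w : V -> R) (L : seq V) : Prop :=
  match L with
  | [::] => True
  | v :: L' => good w L' /\
      w v + \sum_(u in nbhd e v :&: [set x in L']) w u = marginal f [set x in L'] v /\
      beta * \sum_(u in nbhd e v :&: [set x in L']) w u < w v
  end.

Lemma good_ext w w' L : {in L, w =1 w'} -> good w L -> good w' L.
Proof.
elim: L => [|v L IH] //= ww [gL [e1 e2]].
have ww' : {in L, w =1 w'} by move=> x xL; apply: ww; rewrite inE xL orbT.
have es : \sum_(u in nbhd e v :&: [set x in L]) w u = \sum_(u in nbhd e v :&: [set x in L]) w' u.
  by apply: eq_bigr => u; rewrite !inE => /andP[_ uL]; apply: ww'.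
rewrite -es -(ww v (mem_head _ _)); split; [exact: IH | by split].
Qed.

Definition inv (st : seq V * (V -> R)) :=
  [/\ uniq st.1, (forall u, 0 <= st.2 u) & good st.2 st.1].

Hypothesis beta0 : 0 < beta.

Lemma step_inv c st v : inv st -> v \notin st.1 -> inv (step c st v).
Proof.
case: st => Sk w [/= uS w0 g] vS; rewrite /phase1_step; case: ifP => //= /andP[H _].
set sw := \sum_(u in _) w u in H *.
have sw0 : 0 <= sw by apply: sumr_ge0 => u _; apply: w0.
have bs : 0 <= beta * sw by rewrite mulr_ge0 // ltW.
move: H; rewrite mulrDl mul1r => H.
split => /=.
- by rewrite vS.
- move=> u; case: eqP => _; last exact: w0.
  lra.
- rewrite eqxx; split.
    apply: (good_ext (w := w)) => // x xS /=.
    by case: eqP => // xv; move: vS; rewrite -xv xS.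
  have -> : \sum_(u in nbhd e v :&: [set x in Sk]) (if u == v then marginal f [set x in Sk] v - sw else w u) = sw.
    apply: eq_bigr => u; rewrite !inE => /andP[_ uS'].
    by case: eqP => // uv; move: vS; rewrite -uv uS'.
  split; first by rewrite subrK.
  lra.
Qed.

Lemma foldl_inv c s st : inv st -> uniq s -> (forall x, x \in st.1 -> x \notin s) ->
  inv (foldl (step c) st s).
Proof.
elim: s st => [|v s IH] st //= I /andP[vs us] H.
apply: IH => //.
  apply: step_inv => //; apply/negP => /H; by rewrite mem_head.
move=> x; rewrite step_S => /orP[/H|/andP[/eqP-> _] //].
by rewrite inE negb_or => /andP[].
Qed.

End Phase1.

Section Sums.
Variables (R : realFieldType) (V : finType).
Lemma sum_sub_le (w : V -> R) (A B : {set V}) : (forall u, 0 <= w u) -> A \subset B ->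
  \sum_(u in A) w u <= \sum_(u in B) w u.
Proof.
move=> w0 sAB; rewrite [X in X <= _]big_mkcond [X in _ <= X]big_mkcond /=.
apply: ler_sum => u _; case uA: (u \in A); first by rewrite (subsetP sAB u uA).
by case: (u \in B).
Qed.

Lemma sum_setU_le (w : V -> R) (A B : {set V}) : (forall u, 0 <= w u) ->
  \sum_(u in A :|: B) w u <= \sum_(u in A) w u + \sum_(u in B) w u.
Proof.
move=> w0; rewrite !(big_mkcond (fun u => u \in _)) /= -big_split /=.
apply: ler_sum => u _; rewrite inE; have := w0 u.
by case: (u \in A); case: (u \in B) => /= H; lra.
Qed.
End Sums.

Section Phase2.
Variables (R : realFieldType) (V : finType) (e : rel V) (f : {set V} -> R) (beta : R).
Hypotheses (sg : simple_graph e) (f_ge0 : forall A, 0 <= f A) (f0 : f set0 = 0)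
  (fsub : submodular f) (beta0 : 0 < beta).

Lemma good_f w L : good e f beta w L -> uniq L ->
  beta * f [set x in L] <= (1 + beta) * \sum_(u in [set x in L]) w u.
Proof.
elim: L => [|v L IH] /=.
  move=> _ _; have E : [set x in [::]] = set0 :> {set V} by apply/setP=> x; rewrite !inE.
  by rewrite E big_set0 f0 !mulr0.
move=> [gL [e1 e2]] /andP[vL uL].
have -> : [set x in v :: L] = v |: [set x in L] by apply/setP=> x; rewrite !inE.
rewrite big_setU1 ?inE //=.
have := IH gL uL.
have -> : f (v |: [set x in L]) = f [set x in L] + marginal f [set x in L] v.
  by rewrite /marginal addrC subrK.
move: e1 e2; set sN := \sum_(u in _) w u => e1 e2; rewrite -e1.
nra.
Qed.

Definition ph2 (A : {set V}) (L : seq V) :=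
  foldl (fun Sout v => if independent e (v |: Sout) then v |: Sout else Sout) A L.

Lemma indep_add u A : independent e A -> (forall v, v \in A -> ~~ e u v) ->
  independent e (u |: A).
Proof.
case: sg => sym irr.
move=> /forallP iA H; apply/forallP => x; apply/implyP; rewrite in_setU1 => /orP[/eqP->|xA];
  apply/forallP => y; apply/implyP; rewrite in_setU1 => /orP[/eqP->|yA].
- by rewrite irr.
- exact: H.
- by rewrite sym; apply: H.
- by have := iA x; rewrite xA /= => /forallP /(_ y); rewrite yA.
Qed.

Lemma not_indep u A : independent e A -> ~~ independent e (u |: A) ->
  exists2 v, v \in A & e u v.
Proof.
move=> iA niA; case: (boolP [exists v in A, e u v]) => [/existsP[v /andP[vA euv]]|H].
  by exists v.
case/negP: niA; apply: indep_add => // v vA; apply/negP => euv.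
by case/negP: H; apply/existsP; exists v; rewrite vA.
Qed.

Lemma ph2_props L : forall A, independent e A ->
  [/\ independent e (ph2 A L), A \subset ph2 A L, ph2 A L \subset A :|: [set x in L] &
   forall u, u \in L -> u \notin ph2 A L -> exists2 v, v \in ph2 A L &
     e u v && ((v \in A) || (v \in take (index u L) L))].
Proof.
elim: L => [|x L IH] A iA /=.
  split => //; first by rewrite subsetUl.
set A' := if independent e (x |: A) then x |: A else A.
have iA' : independent e A' by rewrite /A'; case: ifP.
have sAA' : A \subset A' by rewrite /A'; case: ifP => // _; apply: subsetUr.
have sA' : A' \subset x |: A by rewrite /A'; case: ifP => // _; apply: subsetUr.
have [i1 i2 i3 i4] := IH A' iA'.
split => //.
- exact: subset_trans sAA' i2.
- apply/subsetP => y /(subsetP i3); rewrite in_setU => /orP[/(subsetP sA')|]; rewrite !inE.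
    by case/orP => ->; rewrite ?orbT.
  by move=> ->; rewrite ?orbT.
- move=> u; rewrite inE => /orP[/eqP->|uL] uout.
    have xA' : x \notin A' by apply/negP => /(subsetP i2); rewrite (negbTE uout).
    have : ~~ independent e (x |: A).
      by apply/negP => ix; move: xA'; rewrite /A' ix setU11.
    case/(not_indep iA) => v vA exv; exists v; first by apply: (subsetP i2); apply: (subsetP sAA').
    by rewrite exv vA.
  case: (eqVneq u x) => [ux|ux].
    have xA' : x \notin A' by apply/negP => /(subsetP i2); rewrite -ux (negbTE uout).
    have : ~~ independent e (x |: A).
      by apply/negP => ix; move: xA'; rewrite /A' ix setU11.
    case/(not_indep iA) => v vA exv; exists v; first by apply: (subsetP i2); apply: (subsetP sAA').
    by rewrite ux exv vA.
  have [v vout /andP[euv H]] := i4 u uL uout; exists v => //; rewrite euv /=.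
  case/orP: H => [/(subsetP sA')|H]; last by rewrite inE H !orbT.
  rewrite in_setU1 => /orP[/eqP->|->]; by rewrite ?mem_head ?orbT.
Qed.

Definition cov (L : seq V) (O : {set V}) : {set V} := [set u : V | (u \in L) &&
  ((u \in O) || [exists v in O, e u v && (v \in take (index u L) L)])].

Lemma index_cons_neq (u x : V) L : u != x -> index u (x :: L) = (index u L).+1.
Proof. by move=> ux; rewrite /index /= eq_sym (negbTE ux). Qed.

Lemma cov_bound (w : V -> R) L : forall O : {set V}, good e f beta w L -> uniq L -> (forall u, 0 <= w u) ->
  O \subset [set x in L] -> \sum_(u in cov L O) w u <= f O.
Proof.
elim: L => [|x L IH] O /=.
  move=> _ _ _ _; have -> : cov [::] O = set0 by apply/setP => u; rewrite !inE.
  by rewrite big_set0.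
move=> [gL [e1 e2]] /andP[xL uL] w0 sO.
case: sg => sym irr.
case xO: (x \in O).
  set O' := O :\ x.
  have sO' : O' \subset [set y in L].
    apply/subsetP => y; rewrite !inE => /andP[yx yO]; have := subsetP sO y yO.
    by rewrite !inE (negbTE yx).
  have IH' := IH O' gL uL w0 sO'.
  have eO : O = x |: O' by rewrite setD1K.
  have hm := marg_mono fsub (A:=O') (B:=[set y in L]) (x:=x) sO'.
  rewrite inE xL in hm; have {}hm := hm isT.
  have fO : f O = f O' + marginal f O' x by rewrite /marginal -eO addrC subrK.
  have sC : cov L O' \subset [set y in L].
    by apply/subsetP => y; rewrite !inE => /andP[-> _].
  have sc : cov (x :: L) O \subset x |: ((nbhd e x :&: [set y in L]) :|: cov L O').
    apply/subsetP => u; rewrite [u \in cov _ _]inE => /andP[uxL H].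
    case: (eqVneq u x) => [->|ux]; first by rewrite setU11.
    rewrite in_setU1 (negbTE ux) /=.
    have uL' : u \in L by move: uxL; rewrite inE (negbTE ux).
    move: H; rewrite index_cons_neq //= => /orP[uO|/existsP[v /andP[vO /andP[euv vt]]]].
      by rewrite in_setU; apply/orP; right; rewrite inE uL' !inE ux uO.
    move: vt; rewrite inE => /orP[/eqP vx|vt].
      by rewrite in_setU; apply/orP; left; rewrite !inE -vx sym euv uL'.
    rewrite in_setU; apply/orP; right; rewrite inE uL' /=; apply/orP; right.
    apply/existsP; exists v; rewrite euv vt !inE vO andbT /= andbT.
    by apply/negP => /eqP vx; move: xL; rewrite -vx (mem_take vt).
  apply: le_trans (sum_sub_le w0 sc) _.
  rewrite big_setU1; last first.
    rewrite in_setU negb_or; apply/andP; split; first by rewrite !inE (negbTE xL) andbF.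
    by apply/negP => /(subsetP sC); rewrite inE (negbTE xL).
  have := sum_setU_le (nbhd e x :&: [set y in L]) (cov L O') w0.
  rewrite fO /=; lra.
have sO2 : O \subset [set y in L].
  apply/subsetP => y yO; have := subsetP sO y yO; rewrite !inE.
  by case: eqP => [yx|] //=; move: xO; rewrite -yx yO.
apply: le_trans (IH O gL uL w0 sO2).
apply: sum_sub_le => //; apply/subsetP => u; rewrite [u \in cov _ _]inE => /andP[uxL H].
case: (eqVneq u x) => [ux|ux].
  move: H; rewrite ux index_head /= xO /= => /existsP[v /andP[_ /andP[_]]].
  by [].
have uL' : u \in L by move: uxL; rewrite inE (negbTE ux).
move: H; rewrite index_cons_neq //= => /orP[uO|/existsP[v /andP[vO /andP[euv vt]]]].
  by rewrite inE uL' uO.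
move: vt; rewrite inE => /orP[/eqP vx|vt]; first by move: xO; rewrite -vx vO.
rewrite inE uL' /=; apply/orP; right; apply/existsP; exists v; by rewrite vO euv vt.
Qed.

Lemma phase2_bound w L : good e f beta w L -> uniq L -> (forall u, 0 <= w u) ->
  \sum_(u in [set x in L]) w u <= f (phase2 e L).
Proof.
move=> gL uL w0.
have i0 : independent e set0 by apply/forallP => x; rewrite inE.
have [_ _ i3 i4] := ph2_props L i0.
have s3 : ph2 set0 L \subset [set x in L] by rewrite set0U in i3.
have := cov_bound gL uL w0 s3.
have -> : cov L (ph2 set0 L) = [set x in L]; last by [].
apply/setP => u; rewrite !inE; case uL': (u \in L) => //=.
case uo: (u \in ph2 set0 L) => //=.
have [v vo /andP[euv H]] := i4 u uL' (negbT uo).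
apply/existsP; exists v; move: H; by rewrite inE /= vo euv.
Qed.

End Phase2.

Section World.
Variables (R : realFieldType) (V : finType) (e : rel V) (f : {set V} -> R) (beta : R)
  (vs : seq V).
Hypotheses (vo : vertex_ordering vs).

Local Notation step c := (phase1_step e f beta c).
Definition init : seq V * (V -> R) := ([::], fun _ => 0).
Definition pre (t : V) := take (index t vs) vs.
Definition st (t : V) (c : V -> bool) := foldl (step c) init (pre t).
Definition SS t c := [set x in (st t c).1].
Definition Y t c := \sum_(u in nbhd e t :&: SS t c) (st t c).2 u.
Definition X t c := marginal f (SS t c) t.
Definition pass t c := (1 + beta) * Y t c < X t c.
Definition fin c := phase1 e f beta c vs.
Definition Send c := [set x in (fin c).1].
Definition wend c := (fin c).2.

Lemma uvs : uniq vs. Proof. by case: vo. Qed.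
Lemma allvs t : t \in vs. Proof. by case: vo. Qed.

Lemma fin_split t c : fin c = foldl (step c) (st t c) (drop (index t vs) vs).
Proof. by rewrite /fin /phase1 /st /pre -foldl_cat cat_take_drop. Qed.

Lemma drop_t t : drop (index t vs) vs = t :: drop (index t vs).+1 vs.
Proof. exact: drop_index (allvs t). Qed.

Lemma st_sub t c x : x \in (st t c).1 -> x \in pre t.
Proof. by move/foldl_S_sub. Qed.

Lemma t_notin_pre t : t \notin pre t.
Proof. by rewrite /pre in_take ?allvs // ltnn. Qed.

Lemma pre_drop t u : u \in pre t -> u \notin drop (index t vs) vs.
Proof.
move=> up; have := uvs; rewrite -{1}(cat_take_drop (index t vs) vs) cat_uniq.
by case/and3P => _ /hasPn H _; apply/negP => ud; have := H u ud; rewrite up.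
Qed.

Lemma t_notin_rest t : t \notin drop (index t vs).+1 vs.
Proof. by have := drop_uniq (index t vs) uvs; rewrite drop_t /= => /andP[]. Qed.

Lemma wend_pre t c u : u \in pre t -> wend c u = (st t c).2 u.
Proof. by move=> up; rewrite /wend (fin_split t) foldl_w_out // pre_drop. Qed.

Lemma SS_sub t c : SS t c \subset Send c.
Proof.
by apply/subsetP => x; rewrite /SS /Send !inE (fin_split t) => /foldl_S_mono; apply.
Qed.

Lemma t_notin_st t c : t \notin (st t c).1.
Proof. by apply/negP => /st_sub; rewrite (negbTE (t_notin_pre t)). Qed.

Lemma inSend t c : (t \in Send c) = pass t c && c t.
Proof.
rewrite /Send inE (fin_split t) drop_t /=.
have -> : (t \in (foldl (step c) (step c (st t c) t) (drop (index t vs).+1 vs)).1) =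
          (t \in (step c (st t c) t).1).
  apply/idP/idP => [/foldl_S_sub|]; last by move/foldl_S_mono; apply.
  by rewrite (negbTE (t_notin_rest t)) orbF.
rewrite /pass /X /Y /SS; move: (t_notin_st t c); case: (st t c) => Sk w /= tS.
rewrite /phase1_step; case: ifP => _ /=; first by rewrite mem_head.
exact: negbTE.
Qed.

Lemma wend_t t c : t \in Send c -> wend c t = X t c - Y t c.
Proof.
rewrite inSend => H; rewrite /wend (fin_split t) drop_t /= foldl_w_out ?t_notin_rest //.
move: H; rewrite /pass /X /Y /SS; case: (st t c) => Sk w /= H.
by rewrite /phase1_step H /= eqxx.
Qed.

Lemma Y_alt t c : Y t c = \sum_(u in Send c) wend c u * (e t u && (u \in SS t c))%:R.
Proof.
rewrite /Y.
have -> : \sum_(u in nbhd e t :&: SS t c) (st t c).2 u = \sum_(u in nbhd e t :&: SS t c) wend c u.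
  apply: eq_bigr => u; rewrite in_setI => /andP[_ uS]; rewrite (wend_pre (t:=t) c) //.
  by move: uS; rewrite /SS inE => /st_sub.
rewrite big_mkcond [RHS]big_mkcond; apply: eq_bigr => u _.
have memN : (u \in nbhd e t) = e t u by rewrite /nbhd inE.
rewrite in_setI memN.
case uS: (u \in SS t c).
  rewrite (subsetP (SS_sub t c) u uS) andbT; case: (e t u); by rewrite /= ?mulr1n ?mulr0n ?mulr1 ?mulr0.
by rewrite andbF /=; case: (u \in Send c); rewrite ?mulr0n ?mulr0.
Qed.

Definition flip (t : V) (c : {ffun V -> bool}) : {ffun V -> bool} :=
  [ffun v => if v == t then ~~ c v else c v].

Lemma st_flip t (c : {ffun V -> bool}) : st t (flip t c) = st t c.
Proof.
apply: foldl_coin_ext => v vp; rewrite ffunE; case: eqP => // vt.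
by move: vp; rewrite vt (negbTE (t_notin_pre t)).
Qed.

Lemma pass_flip t c : pass t (flip t c) = pass t c.
Proof. by rewrite /pass /Y /X /SS st_flip. Qed.
Lemma X_flip t c : X t (flip t c) = X t c.
Proof. by rewrite /X /SS st_flip. Qed.

Hypothesis beta0 : 0 < beta.

Lemma inv_st t c : inv e f beta (st t c).
Proof.
apply: foldl_inv => //; first exact: take_uniq uvs.
Qed.

Lemma inv_fin c : inv e f beta (fin c).
Proof. apply: foldl_inv => //; exact: uvs. Qed.

Lemma Y_ge0 t c : 0 <= Y t c.
Proof. by move: (inv_st t c); rewrite /inv => -[_ w0 _]; apply: sumr_ge0 => u _; apply: w0. Qed.

Lemma wend_ge0 c u : 0 <= wend c u.
Proof. by move: (inv_fin c); rewrite /inv => -[_ w0 _]; apply: w0. Qed.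

End World.

Section Prob.
Variables (R : realFieldType) (V : finType) (p : R).
Hypotheses (p0 : 0 < p) (p1 : p < 1).

Lemma mu_ge0 (b : {ffun V -> bool}) : 0 <= coin_prob p b.
Proof. by apply: prodr_ge0 => v _; case: (b v) => /=; [exact: ltW | rewrite subr_ge0; exact: ltW]. Qed.

Lemma mu_sum : \sum_(b : {ffun V -> bool}) coin_prob p b = 1.
Proof.
rewrite /coin_prob.
have := bigA_distr_bigA (fun (v : V) (j : bool) => if j then p else 1 - p).
move=> <-; rewrite big1 // => v _; rewrite big_bool /=; ring.
Qed.

Lemma flip_inv (t : V) : involutive (flip t).
Proof. by move=> b; apply/ffunP => v; rewrite !ffunE; case: eqP => // _; rewrite negbK. Qed.

Lemma coin_flip t (G : {ffun V -> bool} -> R) : (forall b, G (flip t b) = G b) ->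
  \sum_b coin_prob p b * (G b * (b t)%:R) = p * \sum_b coin_prob p b * G b.
Proof.
move=> Gf.
pose r (b : {ffun V -> bool}) := \prod_(v | v != t) (if b v then p else 1 - p).
have cp b : coin_prob p b = (if b t then p else 1 - p) * r b by rewrite /coin_prob (bigD1 t).
have rf b : r (flip t b) = r b by apply: eq_bigr => v vt; rewrite ffunE (negbTE vt).
pose Z := \sum_b r b * G b * (b t)%:R.
have h1 : \sum_b coin_prob p b * (G b * (b t)%:R) = p * Z.
  rewrite mulr_sumr; apply: eq_bigr => b _; rewrite cp.
  by case: (b t); rewrite /= ?mulr1n ?mulr0n; ring.
have h2 : \sum_b coin_prob p b * (G b * (~~ b t)%:R) = (1 - p) * Z.
  rewrite (reindex_inj (can_inj (flip_inv t))) /= mulr_sumr; apply: eq_bigr => b _.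
  rewrite cp rf Gf ffunE eqxx.
  by case: (b t); rewrite /= ?mulr1n ?mulr0n; ring.
have h3 : \sum_b coin_prob p b * G b = p * Z + (1 - p) * Z.
  rewrite -h1 -h2 -big_split /=; apply: eq_bigr => b _.
  by case: (b t); rewrite /= ?mulr1n ?mulr0n; ring.
rewrite h1 h3; ring.
Qed.

End Prob.

Lemma indepP (V : finType) (e : rel V) (T : {set V}) x y :
  independent e T -> x \in T -> y \in T -> ~~ e x y.
Proof. by move=> /forallP /(_ x) /implyP H xT yT; have /forallP /(_ y) /implyP := H xT; apply. Qed.

Lemma indep_sub (V : finType) (e : rel V) (T A : {set V}) :
  independent e T -> A \subset T -> independent e A.
Proof.
move=> iT sA; apply/forallP => x; apply/implyP => xA; apply/forallP => y; apply/implyP => yA.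
by apply: (indepP iT); apply: (subsetP sA).
Qed.

Lemma subadd_list (R : realFieldType) (V : finType) (f : {set V} -> R) :
  submodular f -> forall (S : {set V}) (l : seq V), uniq l ->
  f (S :|: [set x in l]) <= f S + \sum_(t <- l) marginal f S t.
Proof.
move=> fsub S; elim => [|x l IH] /=.
  move=> _; have -> : S :|: [set x in [::]] = S by apply/setP => y; rewrite !inE orbF.
  by rewrite big_nil addr0.
move=> /andP[xl ul]; rewrite big_cons.
set B := S :|: [set x in l].
have -> : S :|: [set y in x :: l] = x |: B.
  apply/setP => y; rewrite !inE; by case: (y == x); case: (y \in S); case: (y \in l).
have -> : f (x |: B) = f B + marginal f B x by rewrite /marginal addrC subrK.
have := IH ul.
case xS: (x \in S).
  have e1 : x |: B = B by apply/setP => y; rewrite !inE; case: eqP => // ->; rewrite xS.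
  have e2 : x |: S = S by apply/setP => y; rewrite !inE; case: eqP => // ->; rewrite xS.
  rewrite /marginal e1 e2 !subrr; lra.
have := marg_mono fsub (A:=S) (B:=B) (x:=x).
rewrite subsetUl !inE xS (negbTE xl) /= => /(_ isT isT); lra.
Qed.

Lemma subadd (R : realFieldType) (V : finType) (f : {set V} -> R) :
  submodular f -> forall (S T : {set V}),
  f (S :|: T) <= f S + \sum_(t in T) marginal f S t.
Proof.
move=> fsub S T; have := subadd_list fsub S (enum_uniq (mem T)).
by rewrite set_enum big_enum.
Qed.

Section Final.
Variables (R : realFieldType) (V : finType) (e : rel V) (k : nat) (vs : seq V)
  (f : {set V} -> R) (beta p : R).
Hypotheses (sg : simple_graph e) (k1 : (1 <= k)%N) (kind : inductively_k_independent e k vs)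
  (f_ge0 : forall A, 0 <= f A) (f0 : f set0 = 0) (fsub : submodular f)
  (beta0 : 0 < beta) (p0 : 0 < p) (p1 : p < 1).
Variables (T : {set V}) (iT : independent e T).

Let vo : vertex_ordering vs. Proof. by move: kind; rewrite /inductively_k_independent => -[]. Qed.

Local Notation Y := (Y e f beta vs).
Local Notation X := (X e f beta vs).
Local Notation SS := (SS e f beta vs).
Local Notation st := (st e f beta vs).
Local Notation pass := (pass e f beta vs).
Local Notation Send := (Send e f beta vs).
Local Notation wend := (wend e f beta vs).

Lemma coef_bound c u : (\sum_(t in T) (e t u && (u \in SS t c))%:R + (u \in T)%:R <= k%:R :> R).
Proof.
set A := [set t in T | e t u && (u \in SS t c)].
have -> : \sum_(t in T) (e t u && (u \in SS t c))%:R = \sum_(t in A) (1 : R).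
  rewrite big_mkcond [RHS]big_mkcond; apply: eq_bigr => t _.
  have -> : (t \in A) = (t \in T) && (e t u && (u \in SS t c)) by rewrite /A inE.
  by case: (t \in T); case: (e t u && (u \in SS t c)).
rewrite sumr_const -natrD ler_nat.
case uT: (u \in T).
  have -> : #|A| = 0%N.
    apply/eqP; rewrite cards_eq0; apply/eqP/setP => t; rewrite !inE.
    apply/negP => /and3P[tT etu _]; by have := indepP iT tT uT; rewrite etu.
  by [].
rewrite addn0.
move: kind; rewrite /inductively_k_independent => -[_ H].
have iu : (index u vs < size vs)%N by rewrite index_mem (allvs vo).
have := H (Ordinal iu) A.
have -> : tnth (in_tuple vs) (Ordinal iu) = u by rewrite (tnth_nth u) /= nth_index // (allvs vo).
apply; last by apply: indep_sub iT _; apply/subsetP => t; rewrite inE => /andP[].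
apply/subsetP => t; rewrite !inE => /and3P[tT etu uS].
have sym : symmetric e by case: sg.
rewrite -sym etu /=.
have up := @st_sub _ _ e f beta vs t c u uS.
move/index_ltn: up => lt.
have := allvs vo t; rewrite -{1}(cat_take_drop (index u vs) vs) mem_cat (in_take _ (allvs vo t)).
by rewrite ltnNge (ltnW lt).
Qed.

Lemma charging c : \sum_(t in T) (Y t c + wend c t * (t \in Send c)%:R) <=
  k%:R * \sum_(u in Send c) wend c u.
Proof.
under eq_bigr do rewrite (Y_alt e f beta vo).
rewrite big_split /= exchange_big /=.
have -> : \sum_(t in T) wend c t * (t \in Send c)%:R = \sum_(u in Send c) wend c u * (u \in T)%:R.
  rewrite big_mkcond [RHS]big_mkcond; apply: eq_bigr => u _.
  by case: (u \in T); case: (u \in Send c); rewrite /= ?mulr1n ?mulr0n ?mulr1 ?mulr0.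
rewrite -big_split /= mulr_sumr; apply: ler_sum => u uS.
rewrite -mulr_sumr -mulrDr mulrC; apply: ler_wpM2r; last exact: coef_bound.
exact: (wend_ge0 e f vo beta0).
Qed.

Lemma W_le_out c : \sum_(u in Send c) wend c u <= f (pd_rand e f beta c vs).
Proof.
move: (inv_fin e f vo beta0 c); rewrite /inv => -[u1 w0 g].
rewrite /pd_rand; exact: (phase2_bound sg f_ge0 fsub g u1 w0).
Qed.

Lemma fSend_le c : beta * f (Send c) <= (1 + beta) * \sum_(u in Send c) wend c u.
Proof.
move: (inv_fin e f vo beta0 c); rewrite /inv => -[u1 w0 g].
exact: (good_f f0 g u1).
Qed.

Lemma P3 c : f (T :|: Send c) <= f (Send c) + \sum_(t in T)
  ((1 + beta) * Y t c * (~~ pass t c)%:R + X t c * (pass t c && ~~ c t)%:R).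
Proof.
rewrite setUC; apply: le_trans (subadd fsub (Send c) T) _.
rewrite lerD2l; apply: ler_sum => t _.
case tS: (t \in Send c).
  have e1 : t |: Send c = Send c by apply/setP => y; rewrite in_setU1; case: eqP => // ->; rewrite tS.
  move: tS; rewrite (inSend e f beta vo) => /andP[-> ->] /=.
  by rewrite /marginal e1 subrr !mulr0 addr0.
have hm : marginal f (Send c) t <= X t c.
  by apply: marg_mono => //; [apply: SS_sub | rewrite tS].
move: tS; rewrite (inSend e f beta vo); case: (boolP (pass t c)) => pt /=.
  by move/negbT => -> /=; rewrite mulr0 add0r mulr1.
move=> _; move: pt; rewrite /pass -leNgt => pt; rewrite mulr1 mulr0 addr0.
exact: le_trans hm pt.
Qed.

Let M := Num.max ((1 - p) / p) (1 + beta).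

Lemma term_bound c t :
  (1 + beta) * Y t c * (~~ pass t c)%:R + (1 - p) / p * ((wend c t + Y t c) * (pass t c && c t)%:R)
  <= M * (Y t c + wend c t * (t \in Send c)%:R).
Proof.
have hY := Y_ge0 e f vo beta0 t c.
have hw := wend_ge0 e f vo beta0 c t.
have hM1 : (1 - p) / p <= M by rewrite /M le_max lexx.
have hM2 : 1 + beta <= M by rewrite /M le_max lexx orbT.
rewrite (inSend e f beta vo); move: hM1; set a := (1 - p) / p => hM1.
have M0 : 0 <= M by apply: le_trans hM2; rewrite addr_ge0 // ltW.
case: (pass t c); case: (c t); rewrite /= ?mulr1n ?mulr0n ?mulr1 ?mulr0 ?addr0 ?add0r.
- by rewrite addrC; apply: ler_wpM2r => //; apply: addr_ge0.
- exact: mulr_ge0.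
- exact: ler_wpM2r.
- exact: ler_wpM2r.
Qed.

Definition Ex (g : {ffun V -> bool} -> R) := \sum_b coin_prob p b * g b.

Lemma Ex_add g h : Ex (fun b => g b + h b) = Ex g + Ex h.
Proof. by rewrite /Ex -big_split /=; apply: eq_bigr => b _; rewrite mulrDr. Qed.

Lemma Ex_sum (H : V -> {ffun V -> bool} -> R) :
  Ex (fun b => \sum_(t in T) H t b) = \sum_(t in T) Ex (H t).
Proof.
rewrite /Ex exchange_big /=; apply: eq_bigr => b _; by rewrite mulr_sumr.
Qed.

Lemma Ex_le g h : (forall b, g b <= h b) -> Ex g <= Ex h.
Proof. by move=> H; apply: ler_sum => b _; apply: ler_wpM2l; [apply: mu_ge0 | apply: H]. Qed.

Lemma Ex_scale a g : Ex (fun b => a * g b) = a * Ex g.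
Proof. by rewrite /Ex mulr_sumr; apply: eq_bigr => b _; rewrite mulrCA. Qed.

Lemma exch t : Ex (fun b => X t b * (pass t b && ~~ b t)%:R) =
  Ex (fun b => (1 - p) / p * ((wend b t + Y t b) * (pass t b && b t)%:R)).
Proof.
pose G (b : {ffun V -> bool}) := X t b * (pass t b)%:R.
have Gf b : G (flip t b) = G b by rewrite /G (pass_flip e f beta vo) (X_flip e f beta vo).
have h1 := coin_flip p Gf.
have -> : Ex (fun b => X t b * (pass t b && ~~ b t)%:R) =
          Ex (fun b => G b + (- 1) * (G b * (b t)%:R)).
  apply: eq_bigr => b _; congr (_ * _); rewrite /G.
  by case: (pass t b); case: (b t); rewrite /= ?mulr1n ?mulr0n; ring.
have -> : Ex (fun b => (1 - p) / p * ((wend b t + Y t b) * (pass t b && b t)%:R)) =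
          Ex (fun b => (1 - p) / p * (G b * (b t)%:R)).
  apply: eq_bigr => b _; congr (_ * (_ * _)); rewrite /G.
  case pt: (pass t b); case bt: (b t); rewrite /= ?mulr1n ?mulr0n ?mulr1 ?mulr0 //.
  have tS : t \in Send b by rewrite (inSend e f beta vo) pt bt.
  by rewrite (wend_t vo tS) subrK.
rewrite Ex_add !Ex_scale /Ex h1.
have pn : p != 0 by apply: lt0r_neq0.
field.
exact: pn.
Qed.

Lemma mainlemma : f T <= (k%:R * M + (1 + beta) / beta) / (1 - p) * expected_output e f beta p vs.
Proof.
set C := k%:R * M + (1 + beta) / beta.
have hM2 : 1 + beta <= M by rewrite /M le_max lexx orbT.
have b1 : 0 <= 1 + beta by rewrite addr_ge0 // ltW.
have M0 : 0 <= M by apply: le_trans hM2.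
have C0 : 0 <= C.
  rewrite /C; apply: addr_ge0; first by apply: mulr_ge0 => //; apply: ler0n.
  by apply: divr_ge0 => //; apply: ltW.
have stepA : (1 - p) * f T <= Ex (fun b => f (T :|: Send b)).
  have := @rand_main R V {ffun V -> bool} (coin_prob p) (fun A => f (T :|: A))
    (fun b => Send b) p (mu_ge0 p0 p1) (mu_sum V p) (fun A => f_ge0 _).
  rewrite setU0; apply => //; last exact: ltW.
    move=> A B; have := fsub (T :|: A) (T :|: B).
    have -> : (T :|: A) :|: (T :|: B) = T :|: (A :|: B).
      apply/setP => x; rewrite !inE; by case: (x \in T); case: (x \in A); case: (x \in B).
    have -> : (T :|: A) :&: (T :|: B) = T :|: (A :&: B).
      apply/setP => x; rewrite !inE; by case: (x \in T); case: (x \in A); case: (x \in B).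
    by [].
  move=> v.
  have -> : \sum_b coin_prob p b * (v \in Send b)%:R =
            \sum_b coin_prob p b * ((pass v b)%:R * (b v)%:R).
    apply: eq_bigr => b _; rewrite (inSend e f beta vo).
    by case: (pass v b); case: (b v); rewrite /= ?mulr1n ?mulr0n ?mulr1 ?mulr0.
  rewrite (coin_flip p (G := fun b => (pass v b)%:R)); last by move=> b; rewrite (pass_flip e f beta vo).
  have Hs : \sum_b coin_prob p b * (pass v b)%:R <= \sum_(b : {ffun V -> bool}) coin_prob p b.
    apply: ler_sum => b _; rewrite -{2}[coin_prob p b]mulr1; apply: ler_wpM2l; first exact: mu_ge0.
    by case: (pass v b); rewrite /= ?mulr1n ?mulr0n.
  rewrite (mu_sum V p) in Hs.
  by have := ler_wpM2l (ltW p0) Hs; rewrite mulr1.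
have stepB : Ex (fun b => f (T :|: Send b)) <= Ex (fun b => f (Send b) + \sum_(t in T)
   ((1 + beta) * Y t b * (~~ pass t b)%:R + X t b * (pass t b && ~~ b t)%:R)).
  by apply: Ex_le => b; apply: P3.
have stepC : Ex (fun b => f (Send b) + \sum_(t in T)
   ((1 + beta) * Y t b * (~~ pass t b)%:R + X t b * (pass t b && ~~ b t)%:R)) =
   Ex (fun b => f (Send b) + \sum_(t in T)
   ((1 + beta) * Y t b * (~~ pass t b)%:R + (1 - p) / p * ((wend b t + Y t b) * (pass t b && b t)%:R))).
  rewrite !Ex_add !Ex_sum; congr (_ + _); apply: eq_bigr => t _.
  by rewrite !Ex_add exch.
have stepD : Ex (fun b => f (Send b) + \sum_(t in T)
   ((1 + beta) * Y t b * (~~ pass t b)%:R + (1 - p) / p * ((wend b t + Y t b) * (pass t b && b t)%:R)))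
   <= Ex (fun b => C * f (pd_rand e f beta b vs)).
  apply: Ex_le => b.
  set W := \sum_(u in Send b) wend b u.
  have W0 : 0 <= W by apply: sumr_ge0 => u _; apply: (wend_ge0 e f vo beta0).
  have hW := W_le_out b.
  have hS : f (Send b) <= (1 + beta) / beta * W.
    have := fSend_le b; rewrite mulrAC ler_pdivlMr // mulrC; exact.
  have hT : \sum_(t in T) ((1 + beta) * Y t b * (~~ pass t b)%:R +
      (1 - p) / p * ((wend b t + Y t b) * (pass t b && b t)%:R)) <= M * (k%:R * W).
    apply: le_trans (_ : \sum_(t in T) M * (Y t b + wend b t * (t \in Send b)%:R) <= _).
      by apply: ler_sum => t _; apply: term_bound.
    by rewrite -mulr_sumr; apply: ler_wpM2l => //; apply: charging.
  have : C * W <= C * f (pd_rand e f beta b vs) by apply: ler_wpM2l.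
  rewrite /C; move: hS hT; set q := (1 + beta) / beta; set kk := (k%:R : R); nra.
rewrite stepC in stepB.
have stepE := le_trans stepA (le_trans stepB stepD).
rewrite Ex_scale in stepE.
rewrite mulrAC ler_pdivlMr; last by rewrite subr_gt0.
rewrite mulrC; exact: stepE.
Qed.

End Final.

Theorem lemma10 (R : realFieldType) (V : finType) (e : rel V) (k : nat)
    (vs : seq V) (f : {set V} -> R) (beta p : R) :
  simple_graph e ->
  (1 <= k)%N ->
  inductively_k_independent e k vs ->
  (forall A, 0 <= f A) -> f set0 = 0 -> submodular f ->
  0 < beta -> 0 < p -> p < 1 ->
  forall T : {set V}, independent e T ->
    f T <= (k%:R * Num.max ((1 - p) / p) (1 + beta) + (1 + beta) / beta)
             / (1 - p) * expected_output e f beta p vs.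
Proof.
move=> sg k1 kind f_ge0 f0 fsub beta0 p0 p1 T iT.
exact: (mainlemma sg k1 kind f_ge0 f0 fsub beta0 p0 p1 iT).
Qed.
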